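(* Let $(X_n)_{n\ge0}$ be a Galton–Watson process with $X_0=1$ and $X_n=\sum_{k=1}^{X_{n-1}}Y_{n,k}$, where $(Y_{n,k})$ are i.i.d. nonnegative integer-valued random variables with finite mean $m>1$ and finite variance, and assume the process a.s. never becomes extinct (i.e. $\mathbb{P}(X_n=0\text{ for some }n)=0$). Let $L(t)=\log\mathbb{E}[\exp(t(Y_{n,k}-m))]$ and assume $L$ is finite on $[-c,c]$ for some $c>0$; let $I(x)=\sup_{-c\le t\le c}\{xt-L(t)\}$ and $J(x)=\min(I(x),I(-x))$. Define $\tilde m_n=X_n/X_{n-1}$, $\hat m_n=\frac{\sum_{k=1}^nX_k}{\sum_{k=1}^nX_{k-1}}$, and $S_n=\sum_{k=0}^nX_k$. Then for all $n\ge1$ and $x>0$, $$\mathbb{P}(|\tilde m_n-m|\ge x)\le2\,\mathbb{E}[\exp(-J(x)X_{n-1})],$$ $$\mathbb{P}(|\tilde m_n-m|\ge x)\le2\inf_{p>1}\big(\mathbb{E}[\exp(-(p-1)J(x)X_{n-1})]\big)^{1/p},$$ $$\mathbb{P}(|\hat m_n-m|\ge x)\le2\inf_{p>1}\big(\mathbb{E}[\exp(-(p-1)J(x)S_{n-1})]\big)^{1/p}.$$ *)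

(* Defs.v *)
(* No measure theory is installed, so the
   Galton-Watson process is described through its law: a Markov chain on nat
   with X_0 = 1 and transition P(X_k = j | X_{k-1} = i) = p^{*i}(j),
   where p is the offspring pmf.  Probabilities / expectations of functions of
   (X_0,...,X_n) are (nested) countable sums over paths. *)
From Stdlib Require Import Reals List ClassicalEpsilon.
Open Scope R_scope.
Import ListNotations.

(* value of a convergent real series (0 if it does not converge) *)
Definition Psum (f : nat -> R) : R :=
  epsilon (inhabits 0) (fun l => infinite_sum f l).

(* i-fold convolution power of the offspring pmf: P(Y_1+...+Y_i = j) *)
Fixpoint conv (p : nat -> R) (i j : nat) : R :=
  match i with
  | O => if Nat.eqb j 0 then 1 else 0
  | S i' => sum_f_R0 (fun a => p a * conv p i' (j - a)) j
  end.

(* Expectation of f over n further generations, given the history h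
   (h = [x_0; ...; x_k], last element = current population). *)
Fixpoint Ex (p : nat -> R) (n : nat) (h : list nat) (f : list nat -> R) : R :=
  match n with
  | O => f h
  | S n' => Psum (fun j => conv p (last h 0%nat) j * Ex p n' (h ++ [j]) f)
  end.

Definition GWE (p : nat -> R) (n : nat) (f : list nat -> R) : R :=
  Ex p n [1%nat] f.

Definition GWP (p : nat -> R) (n : nat) (A : list nat -> Prop) : R :=
  GWE p n (fun h => if excluded_middle_informative (A h) then 1 else 0).

Definition Xk (h : list nat) (k : nat) : R := INR (nth k h 0%nat).

Definition Sk (h : list nat) (k : nat) : R := sum_f_R0 (fun i => Xk h i) k.

Definition mtilde (h : list nat) (n : nat) : R := Xk h n / Xk h (n - 1).

Definition mhat (h : list nat) (n : nat) : R :=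
  sum_f_R0 (fun k => Xk h (S k)) (n - 1) / sum_f_R0 (fun k => Xk h k) (n - 1).

Definition Lf (p : nat -> R) (m t : R) : R :=
  ln (Psum (fun k => p k * exp (t * (INR k - m)))).

Definition If (p : nat -> R) (m c x : R) : R :=
  epsilon (inhabits 0)
    (is_lub (fun y => exists t, -c <= t <= c /\ y = x * t - Lf p m t)).

Definition Jf (p : nat -> R) (m c x : R) : R := Rmin (If p m c x) (If p m c (- x)).

(* Main.v *)
Require Import Defs.
From Stdlib Require Import Reals List ClassicalEpsilon Lra Lia Psatz FunctionalExtensionality Classical.
Open Scope R_scope.
Import ListNotations.


Lemma sum_mono_idx (f : nat -> R) (N n : nat) :
  (forall k, 0 <= f k) -> (N <= n)%nat -> sum_f_R0 f N <= sum_f_R0 f n.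
Proof.
  intros Hf H. induction H. lra.
  rewrite tech5. specialize (Hf (S m)). lra.
Qed.

Lemma is_sum_ge_partial (f : nat -> R) l N :
  (forall k, 0 <= f k) -> infinite_sum f l -> sum_f_R0 f N <= l.
Proof.
  intros Hf Hs. destruct (Rle_dec (sum_f_R0 f N) l) as [h|h]; auto.
  exfalso. destruct (Hs (sum_f_R0 f N - l)) as [N0 HN]. lra.
  specialize (HN (Nat.max N N0) ltac:(lia)).
  pose proof (sum_mono_idx f N (Nat.max N N0) Hf ltac:(lia)).
  unfold Rdist in HN. rewrite Rabs_right in HN; lra.
Qed.

Lemma is_sum_le (f g : nat -> R) a b :
  infinite_sum f a -> infinite_sum g b -> (forall n, f n <= g n) -> a <= b.
Proof.
  intros Ha Hb H. eapply Rle_cv_lim; [|exact Ha|exact Hb]; intros; apply sum_growing; auto. Qed. Lemma dummy0 : True. Proof. auto.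
Qed.

Lemma is_sum_comp (f g : nat -> R) b :
  (forall n, 0 <= f n <= g n) -> infinite_sum g b ->
  exists a, infinite_sum f a /\ a <= b.
Proof.
  intros H Hb. destruct (Rseries_CV_comp f g H (exist _ b Hb)) as [a Ha].
  exists a. split; auto. apply (is_sum_le f g); auto. intros n; apply H.
Qed.

Lemma is_sum_ext (f g : nat -> R) l :
  (forall n, f n = g n) -> infinite_sum f l -> infinite_sum g l.
Proof.
  intros H. replace g with f; auto. apply functional_extensionality; auto.
Qed.

Lemma is_sum_plus (f g : nat -> R) a b :
  infinite_sum f a -> infinite_sum g b -> infinite_sum (fun n => f n + g n) (a + b).
Proof.
  intros Ha Hb. pose proof (CV_plus _ _ _ _ Ha Hb) as H.
  intros eps He. destruct (H eps He) as [N HN]. exists N. intros n Hn.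
  rewrite sum_plus. apply HN; auto.
Qed.

Lemma is_sum_scal (f : nat -> R) a c :
  infinite_sum f a -> infinite_sum (fun n => c * f n) (c * a).
Proof.
  intros Ha. assert (Hc : Un_cv (fun _ => c) c).
  { intros eps He; exists O; intros; unfold Rdist; rewrite Rminus_eq_0, Rabs_R0; lra. }
  pose proof (CV_mult _ _ _ _ Hc Ha) as H.
  intros eps He. destruct (H eps He) as [N HN]. exists N. intros n Hn.
  replace (sum_f_R0 (fun n0 => c * f n0) n) with (c * sum_f_R0 f n).
  apply HN; auto. rewrite scal_sum. apply sum_eq. intros; ring.
Qed.

Lemma Psum_eq (f : nat -> R) l : infinite_sum f l -> Psum f = l.
Proof.
  intros H. unfold Psum.
  pose proof (epsilon_spec (inhabits 0) (fun l => infinite_sum f l) (ex_intro _ l H)).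
  eapply uniqueness_sum; eauto.
Qed.

Lemma is_sum_pos (f : nat -> R) l j :
  (forall k, 0 <= f k) -> 0 < f j -> infinite_sum f l -> 0 < l.
Proof.
  intros Hf Hj Hs. pose proof (is_sum_ge_partial f l j Hf Hs).
  destruct j. simpl in H; lra. rewrite tech5 in H.
  pose proof (sum_mono_idx f 0 j Hf ltac:(lia)). simpl in H0. specialize (Hf 0%nat). lra.
Qed.

Section Cauchy.
Variables (a b : nat -> R).
Hypothesis (ha : forall k, 0 <= a k) (hb : forall k, 0 <= b k).

Definition cc (j : nat) := sum_f_R0 (fun i => a i * b (j - i)%nat) j.

Lemma DC M : sum_f_R0 cc M = sum_f_R0 (fun i => a i * sum_f_R0 b (M - i)%nat) M.
Proof.
  induction M.
  - simpl. unfold cc. simpl. ring.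
  - rewrite tech5, IHM. rewrite tech5. rewrite Nat.sub_diag.
    rewrite (sum_eq (fun i => a i * sum_f_R0 b (S M - i)) (fun i => a i * sum_f_R0 b (M - i) + a i * b (S M - i)%nat)).
    2:{ intros i Hi. replace (S M - i)%nat with (S (M - i)) by lia. rewrite tech5. ring. }
    rewrite sum_plus. unfold cc. rewrite tech5, Nat.sub_diag. simpl (sum_f_R0 b 0). ring.
Qed.

Lemma cauchy_nonneg A B : infinite_sum a A -> infinite_sum b B ->
  infinite_sum cc (A * B).
Proof.
  intros HA HB.
  assert (Hc : forall j, 0 <= cc j).
  { intros j. unfold cc. apply cond_pos_sum. intros. apply Rmult_le_pos; auto. }
  assert (HBk : forall k, sum_f_R0 b k <= B) by (intros; apply is_sum_ge_partial; auto).
  assert (HAk : forall k, sum_f_R0 a k <= A) by (intros; apply is_sum_ge_partial; auto).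
  assert (HAp : forall k, 0 <= sum_f_R0 a k) by (intros; apply cond_pos_sum; auto).
  assert (HBp : forall k, 0 <= sum_f_R0 b k) by (intros; apply cond_pos_sum; auto).
  assert (Up : forall M, sum_f_R0 cc M <= A * B).
  { intros M. rewrite DC.
    apply Rle_trans with (sum_f_R0 (fun i => a i * B) M).
    - apply sum_Rle. intros. apply Rmult_le_compat_l; auto.
    - rewrite <- scal_sum. rewrite Rmult_comm. apply Rmult_le_compat_r.
      + apply Rle_trans with (sum_f_R0 b 0); auto.
      + auto. }
  assert (Lo : forall N K, sum_f_R0 a N * sum_f_R0 b K <= sum_f_R0 cc (N + K)).
  { intros N K. rewrite DC.
    apply Rle_trans with (sum_f_R0 (fun i => a i * sum_f_R0 b (N + K - i)) N).
    - rewrite Rmult_comm, scal_sum. apply sum_Rle. intros i Hi.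
      apply Rmult_le_compat_l; auto. apply sum_mono_idx; auto; lia.
    - apply sum_mono_idx; [|lia]. intros; apply Rmult_le_pos; auto. }
  intros eps He.
  assert (HA0 : 0 <= A) by (apply Rle_trans with (sum_f_R0 a 0); auto).
  assert (HB0 : 0 <= B) by (apply Rle_trans with (sum_f_R0 b 0); auto).
  set (d := eps / (A + B + 1)).
  assert (Hd : 0 < d) by (unfold d; apply Rdiv_lt_0_compat; lra).
  assert (Hd2 : d * (A + B) < eps).
  { unfold d. apply Rmult_lt_reg_r with (A + B + 1); [lra|].
    field_simplify; [|lra]. nra. }
  destruct (HA d Hd) as [N HN]. destruct (HB d Hd) as [K HK].
  exists (N + K)%nat. intros M HM.
  specialize (HN N (le_n _)). specialize (HK K (le_n _)).
  unfold Rdist in *. destruct (Rabs_def2 _ _ HN). destruct (Rabs_def2 _ _ HK).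
  pose proof (Lo N K). pose proof (sum_mono_idx cc (N+K) M Hc HM).
  pose proof (Up M). pose proof (HAk N). pose proof (HBk K).
  pose proof (HAp N). pose proof (HBp K).
  apply Rabs_def1; [|].
  - nra.
  - assert (E1 : (sum_f_R0 a N - A) * sum_f_R0 b K >= - d * sum_f_R0 b K) by nra.
    assert (E2 : A * (sum_f_R0 b K - B) >= A * (- d)).
    { apply Rle_ge. apply Rmult_le_compat_l; lra. }
    assert (sum_f_R0 a N * sum_f_R0 b K >= A * B - d * (A + B)) by nra. nra.
Qed.
End Cauchy.

Lemma conv_nonneg p : (forall k, 0 <= p k) -> forall K j, 0 <= conv p K j.
Proof.
  intros Hp K. induction K; intros j; simpl.
  - destruct (Nat.eqb j 0); lra.
  - apply cond_pos_sum. intros; apply Rmult_le_pos; auto.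
Qed.

Lemma conv_mgf p m t Phi : (forall k, 0 <= p k) ->
  infinite_sum (fun k => p k * exp (t * (INR k - m))) Phi ->
  forall K, infinite_sum (fun j => conv p K j * exp (t * (INR j - INR K * m))) (Phi ^ K).
Proof.
  intros Hp HPhi K. induction K.
  - simpl. intros eps He. exists O. intros n Hn.
    assert (sum_f_R0 (fun j => (if Nat.eqb j 0 then 1 else 0) * exp (t * (INR j - 0 * m))) n = 1).
    { induction n. simpl. rewrite Rmult_0_l, Rminus_0_r, Rmult_0_r, exp_0. ring.
      rewrite tech5, IHn by lia. simpl. ring. }
    rewrite H. unfold Rdist. rewrite Rminus_diag, Rabs_R0. lra.
  - simpl pow.
    pose proof (cauchy_nonneg (fun k => p k * exp (t * (INR k - m)))
                  (fun j => conv p K j * exp (t * (INR j - INR K * m)))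
                  ltac:(intros; apply Rmult_le_pos; [auto|left; apply exp_pos])
                  ltac:(intros; apply Rmult_le_pos; [apply conv_nonneg; auto|left; apply exp_pos])
                  Phi (Phi ^ K) HPhi IHK) as H.
    eapply is_sum_ext; [|exact H]. intros j. unfold cc. simpl conv.
    symmetry. match goal with |- ?S * ?E = _ => rewrite (Rmult_comm S E), scal_sum end. apply sum_eq. intros i Hi.
    rewrite minus_INR by lia. rewrite S_INR.
    replace (t * (INR j - (INR K + 1) * m)) with (t * (INR i - m) + t * (INR j - INR i - INR K * m)) by ring.
    rewrite exp_plus. ring.
Qed.

Lemma conv_sum1 p : (forall k, 0 <= p k) -> infinite_sum p 1 ->
  forall K, infinite_sum (fun j => conv p K j) 1.
Proof.
  intros Hp H1 K.
  assert (E0: forall x, exp (0 * x) = 1) by (intros; rewrite Rmult_0_l; apply exp_0).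
  pose proof (conv_mgf p 0 0 1 Hp) as H.
  assert (H2 : infinite_sum (fun k => p k * exp (0 * (INR k - 0))) 1).
  { eapply is_sum_ext; [|exact H1]. intros n; cbv beta; rewrite E0; ring. }
  specialize (H H2 K). rewrite pow1 in H.
  eapply is_sum_ext; [|exact H]. intros n; cbv beta; rewrite E0; ring.
Qed.

Fixpoint Good (p : nat -> R) (n : nat) (h : list nat) (f : list nat -> R) : Prop :=
  match n with
  | O => True
  | S n' => (forall j, Good p n' (h ++ [j]) f) /\
            exists l, infinite_sum (fun j => conv p (last h 0%nat) j * Ex p n' (h ++ [j]) f) l
  end.

Lemma len_app1 (h : list nat) j : length (h ++ [j]) = S (length h).
Proof. rewrite length_app. simpl. lia. Qed.

Lemma is_sum_nonneg f l : (forall k, 0 <= f k) -> infinite_sum f l -> 0 <= l.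
Proof. intros H Hs. pose proof (is_sum_ge_partial f l 0 H Hs). simpl in H0. specialize (H 0%nat). lra. Qed.

Lemma is_sum_zero : infinite_sum (fun _ => 0) 0.
Proof. intros eps He. exists O. intros n _. rewrite sum_cte. unfold Rdist. rewrite Rmult_0_l, Rminus_diag, Rabs_R0. lra. Qed.

Lemma Ex_last p n h f : Ex p (S n) h f =
  Ex p n h (fun h' => Psum (fun j => conv p (last h' 0%nat) j * f (h' ++ [j]))).
Proof.
  revert h. induction n; intros h. reflexivity.
  change (Ex p (S (S n)) h f) with (Psum (fun j => conv p (last h 0%nat) j * Ex p (S n) (h ++ [j]) f)).
  change (Ex p (S n) h (fun h' => Psum (fun j => conv p (last h' 0%nat) j * f (h' ++ [j]))))
    with (Psum (fun j => conv p (last h 0%nat) j * Ex p n (h ++ [j]) (fun h' => Psum (fun j => conv p (last h' 0%nat) j * f (h' ++ [j]))))).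
  f_equal. apply functional_extensionality. intros j. rewrite IHn. reflexivity.
Qed.

Lemma Ex_ext p n h f g : (forall h', length h' = (length h + n)%nat -> f h' = g h') ->
  Ex p n h f = Ex p n h g.
Proof.
  revert h. induction n; intros h H; simpl.
  - apply H. lia.
  - f_equal. apply functional_extensionality. intros j. f_equal. apply IHn.
    intros h' Hl. apply H. rewrite len_app1 in Hl. lia.
Qed.

Lemma Good_ext p n h f g : (forall h', length h' = (length h + n)%nat -> f h' = g h') ->
  Good p n h f -> Good p n h g.
Proof.
  revert h. induction n; intros h H G; simpl; auto.
  destruct G as [G1 [l Hl]]. split.
  - intros j. apply IHn; auto. intros h' Hl'. apply H. rewrite len_app1 in Hl'. lia.
  - exists l. eapply is_sum_ext; [|exact Hl]. intros j. cbv beta. f_equal. apply Ex_ext.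
    intros h' Hl'. apply H. rewrite len_app1 in Hl'. lia.
Qed.

Section ExTheory.
Variable p : nat -> R.
Hypothesis Hp : forall k, 0 <= p k.
Hypothesis Hc : forall K, infinite_sum (conv p K) 1.

Lemma Good_comp n : forall h f g, (forall h', length h' = (length h + n)%nat -> 0 <= f h' <= g h') ->
  Good p n h g -> Good p n h f /\ 0 <= Ex p n h f <= Ex p n h g.
Proof.
  induction n; intros h f g H G; simpl.
  - split; [auto|]. apply H. lia.
  - destruct G as [G1 [lg Hlg]].
    assert (IH : forall j, Good p n (h ++ [j]) f /\ 0 <= Ex p n (h ++ [j]) f <= Ex p n (h ++ [j]) g).
    { intros j. apply IHn; auto. intros h' Hl. apply H. rewrite len_app1 in Hl. lia. }
    destruct (is_sum_comp (fun j => conv p (last h 0%nat) j * Ex p n (h ++ [j]) f)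
               (fun j => conv p (last h 0%nat) j * Ex p n (h ++ [j]) g) lg) as [lf [Hlf Hle]]; auto.
    { intros j. destruct (IH j) as [_ [I1 I2]]. pose proof (conv_nonneg p Hp (last h 0%nat) j).
      split; [apply Rmult_le_pos|apply Rmult_le_compat_l]; auto. }
    split; [split|].
    + intros j; apply IH.
    + exists lf; auto.
    + rewrite (Psum_eq _ _ Hlf), (Psum_eq _ _ Hlg). split; auto.
      eapply is_sum_nonneg; [|exact Hlf]. intros j. apply Rmult_le_pos. apply conv_nonneg; auto. apply IH.
Qed.

Lemma Good_const n : forall h a, Good p n h (fun _ => a) /\ Ex p n h (fun _ => a) = a.
Proof.
  induction n; intros h a; simpl. auto.
  assert (Hs : infinite_sum (fun j => conv p (last h 0%nat) j * Ex p n (h ++ [j]) (fun _ => a)) a).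
  { pose proof (is_sum_scal _ _ a (Hc (last h 0%nat))) as H. rewrite Rmult_1_r in H.
    eapply is_sum_ext; [|exact H]. intros j. cbv beta. rewrite (proj2 (IHn _ _)). ring. }
  split; [split|]. intros j; apply IHn. exists a; auto. apply Psum_eq; auto.
Qed.

Lemma Good_bdd n h f B : (forall h', length h' = (length h + n)%nat -> 0 <= f h' <= B) ->
  Good p n h f /\ 0 <= Ex p n h f <= B.
Proof.
  intros H. destruct (Good_const n h B) as [G E].
  destruct (Good_comp n h f (fun _ => B) H G) as [G' E']. rewrite E in E'. auto.
Qed.

Lemma Good_lin n : forall h f g a b, Good p n h f -> Good p n h g ->
  Good p n h (fun h' => a * f h' + b * g h') /\
  Ex p n h (fun h' => a * f h' + b * g h') = a * Ex p n h f + b * Ex p n h g.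
Proof.
  induction n; intros h f g a b Gf Gg; simpl. auto.
  destruct Gf as [Gf1 [lf Hlf]]. destruct Gg as [Gg1 [lg Hlg]].
  assert (Hs : infinite_sum (fun j => conv p (last h 0%nat) j * Ex p n (h ++ [j]) (fun h' => a * f h' + b * g h')) (a * lf + b * lg)).
  { pose proof (is_sum_plus _ _ _ _ (is_sum_scal _ _ a Hlf) (is_sum_scal _ _ b Hlg)) as H.
    eapply is_sum_ext; [|exact H]. intros j. cbv beta. rewrite (proj2 (IHn _ _ _ a b (Gf1 j) (Gg1 j))). ring. }
  split; [split|].
  - intros j. apply IHn; auto.
  - eexists; eauto.
  - rewrite (Psum_eq _ _ Hs), (Psum_eq _ _ Hlf), (Psum_eq _ _ Hlg). reflexivity.
Qed.

Lemma Ex_mono n : forall h f g, (forall h', length h' = (length h + n)%nat -> f h' <= g h') ->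
  Good p n h f -> Good p n h g -> Ex p n h f <= Ex p n h g.
Proof.
  induction n; intros h f g H Gf Gg; simpl.
  - apply H; lia.
  - destruct Gf as [Gf1 [lf Hlf]]. destruct Gg as [Gg1 [lg Hlg]].
    rewrite (Psum_eq _ _ Hlf), (Psum_eq _ _ Hlg). eapply is_sum_le; eauto.
    intros j. apply Rmult_le_compat_l. apply conv_nonneg; auto.
    apply IHn; auto. intros h' Hl. apply H. rewrite len_app1 in Hl. lia.
Qed.

Lemma conv_some_pos K : exists j, 0 < conv p K j.
Proof.
  apply NNPP. intros Hn.
  assert (Hz : forall j, conv p K j <= 0).
  { intros j. apply Rnot_lt_le. intros Hj. apply Hn. eauto. }
  pose proof (is_sum_le _ _ _ _ (Hc K) is_sum_zero Hz). lra.
Qed.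

Lemma Ex_pos n : forall h f, (forall h', length h' = (length h + n)%nat -> 0 < f h') ->
  Good p n h f -> 0 < Ex p n h f.
Proof.
  induction n; intros h f H G; simpl.
  - apply H; lia.
  - destruct G as [G1 [l Hl]]. rewrite (Psum_eq _ _ Hl).
    assert (IH : forall j, 0 < Ex p n (h ++ [j]) f).
    { intros j. apply IHn; auto. intros h' Hl'. apply H. rewrite len_app1 in Hl'. lia. }
    destruct (conv_some_pos (last h 0%nat)) as [j Hj].
    eapply is_sum_pos; [| |exact Hl].
    + intros k. apply Rmult_le_pos. apply conv_nonneg; auto. left; apply IH.
    + cbv beta. apply Rmult_lt_0_compat; eauto.
Qed.

End ExTheory.

Lemma young s X Y : 0 <= s <= 1 -> exp (s * X + (1 - s) * Y) <= s * exp X + (1 - s) * exp Y.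
Proof.
  intros Hs. set (w := s * X + (1 - s) * Y).
  assert (E1 : exp X = exp w * exp (X - w)) by (rewrite <- exp_plus; f_equal; ring).
  assert (E2 : exp Y = exp w * exp (Y - w)) by (rewrite <- exp_plus; f_equal; ring).
  pose proof (exp_ineq1_le (X - w)). pose proof (exp_ineq1_le (Y - w)).
  pose proof (exp_pos w).
  rewrite E1, E2.
  assert (s * (exp w * exp (X - w)) >= s * (exp w * (1 + (X - w)))).
  { apply Rle_ge, Rmult_le_compat_l; [lra|]. apply Rmult_le_compat_l; lra. }
  assert ((1 - s) * (exp w * exp (Y - w)) >= (1 - s) * (exp w * (1 + (Y - w)))).
  { apply Rle_ge, Rmult_le_compat_l; [lra|]. apply Rmult_le_compat_l; lra. }
  assert (s * (exp w * (1 + (X - w))) + (1 - s) * (exp w * (1 + (Y - w))) = exp w).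
  { unfold w. ring. }
  lra.
Qed.

Section Jensen.
Variable p : nat -> R.
Hypothesis Hp : forall k, 0 <= p k.
Hypothesis Hc : forall K, infinite_sum (conv p K) 1.

Lemma jensen n h g s : 0 <= s <= 1 ->
  Good p n h (fun h' => exp (g h')) -> Good p n h (fun h' => exp (s * g h')) ->
  Ex p n h (fun h' => exp (s * g h')) <= exp (s * ln (Ex p n h (fun h' => exp (g h')))).
Proof.
  intros Hs G1 G2.
  set (a := Ex p n h (fun h' => exp (g h'))).
  assert (Ha : 0 < a) by (apply Ex_pos; auto; intros; apply exp_pos).
  set (K := exp (- ((1 - s) * ln a))).
  destruct (Good_const p Hc n h 1) as [G3 E3].
  destruct (Good_lin p n h (fun h' => exp (g h')) (fun _ => 1) (K * s) (K * (1 - s) * a) G1 G3) as [G4 E4].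
  apply Rle_trans with (Ex p n h (fun h' => K * s * exp (g h') + K * (1 - s) * a * 1)).
  - apply (Ex_mono p Hp); auto. intros h' _.
    replace (exp (s * g h')) with (K * exp (s * g h' + (1 - s) * ln a)).
    2:{ unfold K. rewrite <- exp_plus. f_equal. ring. }
    pose proof (young s (g h') (ln a) Hs). rewrite exp_ln in H by auto.
    assert (0 < K) by apply exp_pos. nra.
  - rewrite E4, E3. fold a. unfold K.
    replace (exp (- ((1 - s) * ln a)) * s * a + exp (- ((1 - s) * ln a)) * (1 - s) * a * 1)
      with (exp (- ((1 - s) * ln a)) * a) by ring.
    rewrite <- (exp_ln a) at 2 by auto. rewrite <- exp_plus. right. f_equal. ring.
Qed.
End Jensen.

Section LI.
Variables (p : nat -> R) (m c : R).
Hypothesis Hp : forall k, 0 <= p k.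
Hypothesis H1 : infinite_sum p 1.
Hypothesis Hm : infinite_sum (fun k => INR k * p k) m.
Hypothesis Hc0 : 0 < c.
Hypothesis Hmgf : forall t, -c <= t <= c ->
       exists l, infinite_sum (fun k => p k * exp (t * (INR k - m))) l.

Lemma Phi_ge1 t l : infinite_sum (fun k => p k * exp (t * (INR k - m))) l -> 1 <= l.
Proof.
  intros Hl.
  assert (H : infinite_sum (fun k => p k + t * (INR k * p k) + (- (t * m)) * p k) (1 + t * m + (- (t * m)) * 1)).
  { apply is_sum_plus. apply is_sum_plus; auto. apply is_sum_scal; auto. apply is_sum_scal; auto. }
  replace 1 with (1 + t * m + - (t * m) * 1) by ring.
  eapply is_sum_le; [exact H|exact Hl|]. intros k. cbv beta.
  pose proof (exp_ineq1_le (t * (INR k - m))). pose proof (Hp k).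
  assert (p k * (1 + t * (INR k - m)) <= p k * exp (t * (INR k - m))) by (apply Rmult_le_compat_l; lra).
  nra.
Qed.

Lemma Lf_val t l : infinite_sum (fun k => p k * exp (t * (INR k - m))) l -> Lf p m t = ln l.
Proof. intros H. unfold Lf. rewrite (Psum_eq _ _ H). auto. Qed.

Lemma Lf_nonneg t : -c <= t <= c -> 0 <= Lf p m t.
Proof.
  intros Ht. destruct (Hmgf t Ht) as [l Hl]. rewrite (Lf_val _ _ Hl).
  pose proof (Phi_ge1 _ _ Hl). rewrite <- ln_1. destruct H. left; apply ln_increasing; lra. subst; lra.
Qed.

Lemma Lf_0 : Lf p m 0 = 0.
Proof.
  rewrite (Lf_val 0 1). apply ln_1. eapply is_sum_ext; [|exact H1].
  intros k; cbv beta. rewrite Rmult_0_l, exp_0. ring.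
Qed.

Definition Eset z := fun y => exists t, -c <= t <= c /\ y = z * t - Lf p m t.

Lemma If_lub z : is_lub (Eset z) (If p m c z).
Proof.
  assert (Hb : bound (Eset z)).
  { exists (Rabs z * c). intros y [t [Ht ->]]. pose proof (Lf_nonneg t Ht).
    assert (z * t <= Rabs z * c).
    { apply Rle_trans with (Rabs (z * t)). apply Rle_abs. rewrite Rabs_mult.
      apply Rmult_le_compat_l. apply Rabs_pos. apply Rabs_le; lra. }
    lra. }
  assert (Hne : exists y, Eset z y).
  { exists (z * 0 - Lf p m 0). exists 0. split; auto; lra. }
  destruct (completeness _ Hb Hne) as [M HM].
  unfold If. apply (epsilon_spec (inhabits 0) (is_lub (Eset z))). exists M; auto.
Qed.

Lemma If_ge y z : Eset z y -> y <= If p m c z.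
Proof. intros H. apply (If_lub z). auto. Qed.

Lemma If_nonneg z : 0 <= If p m c z.
Proof. apply If_ge. exists 0. split. lra. rewrite Lf_0. ring. Qed.

Lemma If_approx z a : a < If p m c z -> exists y, Eset z y /\ a < y.
Proof.
  intros Ha. apply NNPP. intros Hn.
  assert (is_upper_bound (Eset z) a).
  { intros y Hy. apply Rnot_lt_le. intros Hlt. apply Hn. eauto. }
  pose proof (proj2 (If_lub z) a H). lra.
Qed.

Lemma Jf_nonneg x : 0 <= Jf p m c x.
Proof. unfold Jf. apply Rmin_glb; apply If_nonneg. Qed.

End LI.

Definition indP (P : Prop) : R := if excluded_middle_informative P then 1 else 0.

Lemma indP_01 P : 0 <= indP P <= 1.
Proof. unfold indP. destruct excluded_middle_informative; lra. Qed.

Lemma exp_INR_mul K a : exp (INR K * a) = exp a ^ K.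
Proof.
  induction K. simpl. rewrite Rmult_0_l; apply exp_0.
  rewrite S_INR. simpl pow. rewrite <- IHK, <- exp_plus. f_equal. ring.
Qed.

Lemma last_nth (h : list nat) k d : length h = S k -> last h d = nth k h d.
Proof.
  revert k. induction h as [|a h IH]; intros k Hl. simpl in Hl; lia.
  destruct h as [|b h]. simpl in *. assert (k = 0%nat) by lia. subst. reflexivity.
  destruct k. simpl in Hl; lia. simpl in Hl.
  change (last (a :: b :: h) d) with (last (b :: h) d). rewrite (IH k) by (simpl; lia). reflexivity.
Qed.

Lemma nth_app_lt (h : list nat) j k : (k < length h)%nat -> nth k (h ++ [j]) 0%nat = nth k h 0%nat.
Proof. intros; apply app_nth1; auto. Qed.

Lemma nth_app_eq (h : list nat) j k : length h = k -> nth k (h ++ [j]) 0%nat = j.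
Proof. intros H. rewrite app_nth2 by lia. rewrite H, Nat.sub_diag. reflexivity. Qed.

Lemma exp_le_exp x y : x <= y -> exp x <= exp y.
Proof. intros [H|H]. left; apply exp_increasing; auto. subst; lra. Qed.

Section Tilde.
Variables (p : nat -> R) (m c : R).
Hypothesis Hp : forall k, 0 <= p k.
Hypothesis H1 : infinite_sum p 1.
Hypothesis Hm : infinite_sum (fun k => INR k * p k) m.
Hypothesis Hc0 : 0 < c.
Hypothesis Hmgf : forall t, -c <= t <= c ->
       exists l, infinite_sum (fun k => p k * exp (t * (INR k - m))) l.

Let Hc := conv_sum1 p Hp H1.

Lemma sum_phi K (phi : nat -> R) : (forall j, 0 <= phi j <= 1) ->
  exists v, infinite_sum (fun j => conv p K j * phi j) v /\ 0 <= v <= 1.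
Proof.
  intros Hphi. destruct (is_sum_comp (fun j => conv p K j * phi j) (conv p K) 1) as [v [Hv Hle]]; auto.
  - intros j. pose proof (conv_nonneg p Hp K j). specialize (Hphi j).
    split. apply Rmult_le_pos; lra. rewrite <- (Rmult_1_r (conv p K j)) at 2. apply Rmult_le_compat_l; lra.
  - exists v. split; auto. split; auto. eapply is_sum_nonneg; [|exact Hv].
    intros j. pose proof (conv_nonneg p Hp K j). specialize (Hphi j). apply Rmult_le_pos; lra.
Qed.

Lemma chernoff K z : z <> 0 ->
  Psum (fun j => conv p K j * indP (z * (INR j - INR K * m) >= z * z * INR K)) <= exp (- INR K * If p m c z).
Proof.
  intros Hz.
  destruct (sum_phi K (fun j => indP (z * (INR j - INR K * m) >= z * z * INR K))) as [v [Hv Hv01]].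
  { intros; apply indP_01. }
  rewrite (Psum_eq _ _ Hv).
  assert (HK : 0 <= INR K) by apply pos_INR.
  assert (Hy : forall y, Eset p m c z y -> v <= exp (- INR K * y)).
  { intros y [t [Ht ->]].
    destruct (Rle_lt_dec 0 (z * t)) as [Hzt|Hzt].
    - destruct (Hmgf t Ht) as [Phi HPhi].
      pose proof (conv_mgf p m t Phi Hp HPhi K) as HM.
      pose proof (is_sum_scal _ _ (exp (- (t * z * INR K))) HM) as HM2.
      assert (HPhi1 := Phi_ge1 p m Hp H1 Hm t Phi HPhi).
      replace (exp (- INR K * (z * t - Lf p m t))) with (exp (- (t * z * INR K)) * Phi ^ K).
      2:{ rewrite (Lf_val p m t Phi HPhi). replace (Phi ^ K) with (exp (ln Phi) ^ K) by (rewrite exp_ln; lra). rewrite <- exp_INR_mul, <- exp_plus.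
          f_equal. ring. }
      eapply is_sum_le; [exact Hv|exact HM2|]. intros j. cbv beta.
      pose proof (conv_nonneg p Hp K j).
      replace (exp (- (t * z * INR K)) * (conv p K j * exp (t * (INR j - INR K * m)))) with (conv p K j * exp (- (t * z * INR K) + t * (INR j - INR K * m))) by (rewrite exp_plus; ring).
      apply Rmult_le_compat_l; auto.
      unfold indP. destruct excluded_middle_informative as [E|E]; [|left; apply exp_pos].
      rewrite <- exp_0. apply exp_le_exp.
      assert (Hq : z * z * (- (t * z * INR K) + t * (INR j - INR K * m)) = (z * t) * (z * (INR j - INR K * m) - z * z * INR K)) by ring.
      assert (0 <= (z * t) * (z * (INR j - INR K * m) - z * z * INR K)) by (apply Rmult_le_pos; lra).
      assert (0 < z * z) by nra.
      nra.
    - pose proof (Lf_nonneg p m c Hp H1 Hm Hmgf t Ht).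
      apply Rle_trans with 1; [lra|]. rewrite <- exp_0. apply exp_le_exp. nra. }
  destruct (Rle_dec v (exp (- INR K * If p m c z))) as [ok|nok]; auto.
  exfalso. apply Rnot_le_lt in nok.
  destruct (Req_dec (INR K) 0) as [K0|K0].
  - assert (E0 : Eset p m c z 0) by (exists 0; split; [lra|]; rewrite Lf_0 by auto; ring).
    specialize (Hy 0 E0). rewrite K0 in Hy, nok. replace (-0 * 0) with 0 in Hy by ring. replace (-0 * If p m c z) with 0 in nok by ring. lra.
  - assert (HKp : 0 < INR K) by lra.
    assert (Hvp : 0 < v) by (pose proof (exp_pos (- INR K * If p m c z)); lra).
    assert (Ha : - ln v / INR K < If p m c z).
    { apply ln_increasing in nok; [|apply exp_pos]. rewrite ln_exp in nok.
      apply Rmult_lt_reg_r with (INR K); auto. unfold Rdiv. rewrite Rmult_assoc, Rinv_l by lra. nra. }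
    destruct (If_approx p m c Hp H1 Hm Hc0 Hmgf z _ Ha) as [y [Ey Hya]].
    specialize (Hy y Ey).
    assert (exp (- INR K * y) < v).
    { rewrite <- (exp_ln v) by auto. apply exp_increasing.
      apply Rmult_lt_compat_r with (r := INR K) in Hya; auto. unfold Rdiv in Hya.
      rewrite Rmult_assoc, Rinv_l in Hya by lra. nra. }
    lra.
Qed.

End Tilde.

Lemma indP_or (PA B1 B2 : Prop) : (PA -> B1 \/ B2) -> indP PA <= indP B1 + indP B2.
Proof.
  intros H. unfold indP. destruct (excluded_middle_informative PA) as [a|a];
  destruct (excluded_middle_informative B1); destruct (excluded_middle_informative B2); try lra.
  destruct (H a); tauto.
Qed.

Section Tilde2.
Variables (p : nat -> R) (m c : R).
Hypothesis Hp : forall k, 0 <= p k.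
Hypothesis H1 : infinite_sum p 1.
Hypothesis Hm : infinite_sum (fun k => INR k * p k) m.
Hypothesis Hc0 : 0 < c.
Hypothesis Hmgf : forall t, -c <= t <= c ->
       exists l, infinite_sum (fun k => p k * exp (t * (INR k - m))) l.

Let Hc := conv_sum1 p Hp H1.

Lemma tilde_cond K x : 0 < x ->
  Psum (fun j => conv p K j * indP (Rabs (INR j / INR K - m) >= x)) <= 2 * exp (- Jf p m c x * INR K).
Proof.
  intros Hx.
  destruct (sum_phi p Hp H1 K (fun j => indP (Rabs (INR j / INR K - m) >= x))) as [v [Hv Hv01]].
  { intros; apply indP_01. }
  rewrite (Psum_eq _ _ Hv).
  destruct (Req_dec (INR K) 0) as [K0|K0].
  { rewrite K0, Rmult_0_r, exp_0. lra. }
  assert (HKp : 0 < INR K) by (pose proof (pos_INR K); lra).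
  destruct (sum_phi p Hp H1 K (fun j => indP (x * (INR j - INR K * m) >= x * x * INR K))) as [v1 [Hv1 _]].
  { intros; apply indP_01. }
  destruct (sum_phi p Hp H1 K (fun j => indP (-x * (INR j - INR K * m) >= -x * -x * INR K))) as [v2 [Hv2 _]].
  { intros; apply indP_01. }
  pose proof (chernoff p m c Hp H1 Hm Hc0 Hmgf K x ltac:(lra)) as C1.
  pose proof (chernoff p m c Hp H1 Hm Hc0 Hmgf K (-x) ltac:(lra)) as C2.
  rewrite (Psum_eq _ _ Hv1) in C1. rewrite (Psum_eq _ _ Hv2) in C2.
  assert (v <= v1 + v2).
  { eapply is_sum_le; [exact Hv| apply is_sum_plus; [exact Hv1|exact Hv2]|]. intros j. cbv beta.
    rewrite <- Rmult_plus_distr_l. apply Rmult_le_compat_l. apply conv_nonneg; auto.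
    apply indP_or. intros HA.
    set (r := INR j / INR K) in HA.
    assert (Hj : INR j = r * INR K) by (unfold r; field; lra).
    rewrite Hj. destruct (Rcase_abs (r - m)) as [Hn|Hn].
    - rewrite Rabs_left in HA by lra. right.
      assert (0 <= (x * INR K) * (-(r - m) - x)) by (apply Rmult_le_pos; nra).
      apply Rle_ge. apply Rminus_le. replace (-x * -x * INR K - -x * (r * INR K - INR K * m)) with (- ((x * INR K) * (-(r - m) - x))) by ring. lra.
    - rewrite Rabs_right in HA by lra. left.
      assert (0 <= (x * INR K) * ((r - m) - x)) by (apply Rmult_le_pos; nra).
      apply Rle_ge. apply Rminus_le. replace (x * x * INR K - x * (r * INR K - INR K * m)) with (- ((x * INR K) * ((r - m) - x))) by ring. lra. }
  assert (J1 : exp (- INR K * If p m c x) <= exp (- Jf p m c x * INR K)).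
  { apply exp_le_exp. unfold Jf. pose proof (Rmin_l (If p m c x) (If p m c (-x))). nra. }
  assert (J2 : exp (- INR K * If p m c (-x)) <= exp (- Jf p m c x * INR K)).
  { apply exp_le_exp. unfold Jf. pose proof (Rmin_r (If p m c x) (If p m c (-x))). nra. }
  lra.
Qed.

Lemma tilde1 n x : (1 <= n)%nat -> 0 < x ->
  GWP p n (fun h => Rabs (mtilde h n - m) >= x)
    <= 2 * GWE p n (fun h => exp (- Jf p m c x * Xk h (n - 1))).
Proof.
  intros Hn Hx. destruct n as [|n0]; [lia|].
  replace (S n0 - 1)%nat with n0 by lia.
  unfold GWP, GWE. rewrite !Ex_last.
  pose proof (Jf_nonneg p m c Hp H1 Hm Hc0 Hmgf x) as HJ.
  set (F := fun h' : list nat => Psum (fun j => conv p (last h' 0%nat) j *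
        (if excluded_middle_informative (Rabs (mtilde (h' ++ [j]) (S n0) - m) >= x) then 1 else 0))).
  set (G := fun h' : list nat => exp (- Jf p m c x * INR (last h' 0%nat))).
  match goal with |- _ <= 2 * Ex _ _ _ ?H => rewrite (Ex_ext p n0 [1%nat] H G) end.
  2:{ intros h' Hl. simpl in Hl. unfold G. unfold Xk.
      destruct (Good_const p Hc 1 h' (exp (- Jf p m c x * INR (last h' 0%nat)))) as [_ E1].
      simpl in E1. rewrite <- E1. f_equal. apply functional_extensionality. intros j.
      rewrite nth_app_lt by lia. rewrite <- last_nth by lia. reflexivity. }
  assert (HF : forall h', length h' = (length [1%nat] + n0)%nat -> 0 <= F h' <= 2 * G h').
  { intros h' Hl. simpl in Hl. unfold F, G.
    pose proof (tilde_cond (last h' 0%nat) x Hx) as T.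
    destruct (sum_phi p Hp H1 (last h' 0%nat) (fun j => indP (Rabs (INR j / INR (last h' 0%nat) - m) >= x))) as [v [Hv Hv01]].
    { intros; apply indP_01. }
    replace (Psum _) with v.
    2:{ symmetry. apply Psum_eq. eapply is_sum_ext; [|exact Hv]. intros j. cbv beta. f_equal.
        unfold indP, mtilde, Xk. rewrite nth_app_eq by lia. replace (S n0 - 1)%nat with n0 by lia.
        rewrite nth_app_lt by lia. rewrite <- last_nth by lia. reflexivity. }
    rewrite (Psum_eq _ _ Hv) in T. lra. }
  assert (HG : forall h', length h' = (length [1%nat] + n0)%nat -> 0 <= G h' <= 1).
  { intros h' _. unfold G. split. left; apply exp_pos. rewrite <- exp_0. apply exp_le_exp.
    pose proof (pos_INR (last h' 0%nat)). nra. }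
  destruct (Good_bdd p Hp Hc n0 [1%nat] G 1 HG) as [GG _].
  destruct (Good_bdd p Hp Hc n0 [1%nat] F 2 ltac:(intros h' Hl; specialize (HF h' Hl); specialize (HG h' Hl); lra)) as [GF _].
  destruct (Good_lin p n0 [1%nat] G G 2 0 GG GG) as [G2 E2].
  apply Rle_trans with (Ex p n0 [1%nat] (fun h' => 2 * G h' + 0 * G h')).
  - apply (Ex_mono p Hp); auto. intros h' Hl. specialize (HF h' Hl). lra.
  - rewrite E2. lra.
Qed.

End Tilde2.

Fixpoint sumr (f : nat -> R) (n : nat) : R :=
  match n with O => 0 | S n' => sumr f n' + f n' end.

Lemma sumr_f f n : sumr f (S n) = sum_f_R0 f n.
Proof. induction n. simpl; ring. change (sumr f (S (S n))) with (sumr f (S n) + f (S n)). rewrite IHn, tech5. ring. Qed.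

Lemma sumr_ext f g n : (forall k, (k < n)%nat -> f k = g k) -> sumr f n = sumr g n.
Proof. induction n; intros H; simpl; auto. rewrite IHn by (intros; apply H; lia). rewrite H by lia. ring. Qed.

Lemma sumr_nonneg f n : (forall k, 0 <= f k) -> 0 <= sumr f n.
Proof. intros H; induction n; simpl. lra. specialize (H n). lra. Qed.

Lemma sumr_lin f g a n : sumr (fun k => f k - a * g k) n = sumr f n - a * sumr g n.
Proof. induction n; simpl. ring. rewrite IHn. ring. Qed.

Lemma Xk_nonneg h k : 0 <= Xk h k.
Proof. apply pos_INR. Qed.

Section Hat.
Variables (p : nat -> R) (m c : R).
Hypothesis Hp : forall k, 0 <= p k.
Hypothesis H1 : infinite_sum p 1.
Hypothesis Hm : infinite_sum (fun k => INR k * p k) m.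
Hypothesis Hc0 : 0 < c.
Hypothesis Hmgf : forall t, -c <= t <= c ->
       exists l, infinite_sum (fun k => p k * exp (t * (INR k - m))) l.

Let Hc := conv_sum1 p Hp H1.

Definition Mf (h : list nat) l := sumr (fun k => Xk h (S k) - m * Xk h k) l.
Definition Sf (h : list nat) l := sumr (fun k => Xk h k) l.
Definition Gf u L (h : list nat) l := exp (u * Mf h l - L * Sf h l).

Lemma Mf_app h j l : length h = S l -> Mf (h ++ [j]) (S l) = Mf h l + (INR j - m * INR (last h 0%nat)).
Proof.
  intros Hl. unfold Mf. simpl. rewrite (sumr_ext _ (fun k => Xk h (S k) - m * Xk h k)).
  2:{ intros k Hk. unfold Xk. rewrite !nth_app_lt by lia. reflexivity. }
  unfold Xk. rewrite nth_app_eq by lia. rewrite nth_app_lt by lia. rewrite (last_nth h l) by lia. reflexivity.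
Qed.

Lemma Sf_app h j l : length h = S l -> Sf (h ++ [j]) (S l) = Sf h l + INR (last h 0%nat).
Proof.
  intros Hl. unfold Sf. simpl. rewrite (sumr_ext _ (fun k => Xk h k)).
  2:{ intros k Hk. unfold Xk. rewrite !nth_app_lt by lia. reflexivity. }
  unfold Xk. rewrite nth_app_lt by lia. rewrite (last_nth h l) by lia. reflexivity.
Qed.

Lemma martingale u Phi : infinite_sum (fun k => p k * exp (u * (INR k - m))) Phi ->
  forall n h l, length h = S l ->
  Good p n h (fun h' => Gf u (ln Phi) h' (l + n)) /\ Ex p n h (fun h' => Gf u (ln Phi) h' (l + n)) = Gf u (ln Phi) h l.
Proof.
  intros HPhi. assert (HP1 := Phi_ge1 p m Hp H1 Hm u Phi HPhi).
  induction n; intros h l Hl.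
  - simpl. rewrite Nat.add_0_r. auto.
  - replace (l + S n)%nat with (S l + n)%nat by lia.
    assert (IH : forall j, Good p n (h ++ [j]) (fun h' => Gf u (ln Phi) h' (S l + n)) /\
                 Ex p n (h ++ [j]) (fun h' => Gf u (ln Phi) h' (S l + n)) = Gf u (ln Phi) (h ++ [j]) (S l)).
    { intros j. apply IHn. rewrite len_app1. lia. }
    set (K := last h 0%nat).
    pose proof (is_sum_scal _ _ (Gf u (ln Phi) h l * exp (- (ln Phi * INR K))) (conv_mgf p m u Phi Hp HPhi K)) as HS.
    assert (E : Gf u (ln Phi) h l * exp (- (ln Phi * INR K)) * Phi ^ K = Gf u (ln Phi) h l).
    { replace (Phi ^ K) with (exp (ln Phi) ^ K) by (rewrite exp_ln; lra).
      rewrite <- exp_INR_mul. rewrite Rmult_assoc, <- exp_plus.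
      replace (- (ln Phi * INR K) + INR K * ln Phi) with 0 by ring. rewrite exp_0; ring. }
    rewrite E in HS.
    assert (HS2 : infinite_sum (fun j => conv p K j * Ex p n (h ++ [j]) (fun h' => Gf u (ln Phi) h' (S l + n))) (Gf u (ln Phi) h l)).
    { eapply is_sum_ext; [|exact HS]. intros j. cbv beta. rewrite (proj2 (IH j)).
      unfold Gf. rewrite Mf_app, Sf_app by auto. fold K.
      replace (u * (Mf h l + (INR j - m * INR K)) - ln Phi * (Sf h l + INR K))
        with ((u * Mf h l - ln Phi * Sf h l) + (- (ln Phi * INR K)) + u * (INR j - INR K * m)) by ring.
      rewrite !exp_plus. ring. }
    split; [split|].
    + intros j; apply IH.
    + eexists; exact HS2.
    + simpl. fold K. apply Psum_eq. auto.
Qed.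

End Hat.

Lemma exp_ge1 x : 0 <= x -> 1 <= exp x.
Proof. intros. rewrite <- exp_0. apply exp_le_exp; auto. Qed.
Lemma exp_le1 x : x <= 0 -> exp x <= 1.
Proof. intros. rewrite <- exp_0. apply exp_le_exp; auto. Qed.

Section Hat2.
Variables (p : nat -> R) (m c : R).
Hypothesis Hp : forall k, 0 <= p k.
Hypothesis H1 : infinite_sum p 1.
Hypothesis Hm : infinite_sum (fun k => INR k * p k) m.
Hypothesis Hc0 : 0 < c.
Hypothesis Hmgf : forall t, -c <= t <= c ->
       exists l, infinite_sum (fun k => p k * exp (t * (INR k - m))) l.

Let Hc := conv_sum1 p Hp H1.

Lemma Sf_nonneg h n : 0 <= Sf h n.
Proof. unfold Sf. apply sumr_nonneg. intros; apply Xk_nonneg. Qed.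

Lemma hat_tail_y n z q y : z <> 0 -> 1 < q -> Eset p m c z y -> 0 <= y ->
  Ex p n [1%nat] (fun h => indP (z * Mf m h n >= z * z * Sf h n))
  <= exp ((1 / q) * ln (Ex p n [1%nat] (fun h => exp (- ((q - 1) * y * Sf h n))))).
Proof.
  intros Hz Hq [u [Hu Hy]] Hy0.
  destruct (Hmgf u Hu) as [Phi HPhi].
  pose proof (Lf_nonneg p m c Hp H1 Hm Hmgf u Hu) as HL0.
  rewrite (Lf_val p m u Phi HPhi) in Hy, HL0.
  set (L := ln Phi) in *.
  set (s := 1 / q).
  assert (Hs : 0 < s < 1) by (unfold s; split; [apply Rdiv_lt_0_compat; lra| apply Rmult_lt_reg_r with q; [lra|]; field_simplify; lra]).
  destruct (martingale p m Hp H1 Hm u Phi HPhi n [1%nat] 0 eq_refl) as [GG EG].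
  simpl (0 + n)%nat in GG, EG.
  assert (EG1 : Gf m u L [1%nat] 0 = 1) by (unfold Gf, Mf, Sf; simpl; rewrite Rmult_0_r, Rmult_0_r, Rminus_0_r; apply exp_0).
  fold L in GG, EG. rewrite EG1 in EG.
  set (W := fun h => exp (- ((q - 1) * y * Sf h n))).
  assert (HW : forall h, 0 < W h <= 1).
  { intros h. unfold W. split. apply exp_pos. apply exp_le1.
    pose proof (Sf_nonneg h n). assert (0 <= (q - 1) * y * Sf h n) by (apply Rmult_le_pos; [apply Rmult_le_pos|]; lra). lra. }
  destruct (Good_bdd p Hp Hc n [1%nat] W 1 ltac:(intros h _; specialize (HW h); lra)) as [GW _].
  set (b := Ex p n [1%nat] W).
  assert (Hb : 0 < b) by (apply Ex_pos; auto; intros h _; apply HW).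
  set (A0 := exp (s * ln b) * (1 - s)).
  set (B0 := exp (s * ln b) * s * exp (- ln b)).
  destruct (Good_lin p n [1%nat] _ W A0 B0 GG GW) as [GL EL].
  destruct (Good_bdd p Hp Hc n [1%nat] (fun h => indP (z * Mf m h n >= z * z * Sf h n)) 1
              ltac:(intros; apply indP_01)) as [GI _].
  apply Rle_trans with (Ex p n [1%nat] (fun h' => A0 * Gf m u L h' n + B0 * W h')).
  - apply (Ex_mono p Hp); auto. intros h _.
    assert (HA0 : 0 <= A0) by (unfold A0; apply Rmult_le_pos; [left; apply exp_pos|lra]).
    assert (HB0 : 0 <= B0) by (unfold B0; apply Rmult_le_pos; [apply Rmult_le_pos|left; apply exp_pos]; [left; apply exp_pos|lra]).
    assert (HG : 0 < Gf m u L h n) by apply exp_pos.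
    specialize (HW h).
    unfold indP. destruct excluded_middle_informative as [ev|ev].
    2:{ apply Rplus_le_le_0_compat; apply Rmult_le_pos; lra. }
    set (X := u * Mf m h n - L * Sf h n).
    set (Y := - ((q - 1) * y * Sf h n) - ln b).
    pose proof (young (1 - s) X Y ltac:(lra)) as HYg.
    replace (1 - (1 - s)) with s in HYg by ring.
    assert (EX : exp X = Gf m u L h n) by reflexivity.
    assert (EY : exp Y = W h * exp (- ln b)) by (unfold Y, W; rewrite <- exp_plus; f_equal; ring).
    rewrite EX, EY in HYg.
    assert (Hexp : s * ln b + ((1 - s) * X + s * Y) = (1 - s) * (u * (Mf m h n - z * Sf h n))).
    { unfold X, Y, s. rewrite Hy. field. lra. }
    assert (Hpos : 0 <= u * (Mf m h n - z * Sf h n)).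
    { assert (Huz : 0 <= u * z) by lra.
      assert (Hzz : 0 < z * z) by nra.
      assert (0 <= (u * z) * (z * Mf m h n - z * z * Sf h n)) by (apply Rmult_le_pos; lra).
      assert (Heq : z * z * (u * (Mf m h n - z * Sf h n)) = (u * z) * (z * Mf m h n - z * z * Sf h n)) by ring.
      destruct (Rle_lt_dec 0 (u * (Mf m h n - z * Sf h n))) as [ok|nok]; auto.
      exfalso. assert (z * z * (u * (Mf m h n - z * Sf h n)) < 0) by (apply Rmult_pos_neg; auto). lra. }
    apply Rle_trans with (exp (s * ln b) * exp ((1 - s) * X + s * Y)).
    + rewrite <- exp_plus, Hexp. apply exp_ge1. apply Rmult_le_pos; lra.
    + unfold A0, B0. pose proof (exp_pos (s * ln b)).
      replace (exp (s * ln b) * (1 - s) * Gf m u L h n + exp (s * ln b) * s * exp (- ln b) * W h)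
        with (exp (s * ln b) * ((1 - s) * Gf m u L h n + s * (W h * exp (- ln b)))) by ring.
      apply Rmult_le_compat_l; lra.
  - rewrite EL, EG. fold b. unfold A0, B0.
    rewrite exp_Ropp, exp_ln by auto. right. field. lra.
Qed.

End Hat2.

Section Hat3.
Variables (p : nat -> R) (m c : R).
Hypothesis Hp : forall k, 0 <= p k.
Hypothesis H1 : infinite_sum p 1.
Hypothesis Hm : infinite_sum (fun k => INR k * p k) m.
Hypothesis Hc0 : 0 < c.
Hypothesis Hmgf : forall t, -c <= t <= c ->
       exists l, infinite_sum (fun k => p k * exp (t * (INR k - m))) l.

Let Hc := conv_sum1 p Hp H1.

Lemma hat_tail n z q : z <> 0 -> 1 < q ->
  Ex p n [1%nat] (fun h => indP (z * Mf m h n >= z * z * Sf h n))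
  <= exp ((1 / q) * ln (Ex p n [1%nat] (fun h => exp (- ((q - 1) * If p m c z * Sf h n))))).
Proof.
  intros Hz Hq.
  set (I0 := If p m c z).
  assert (HI0 : 0 <= I0) by (apply (If_nonneg p m c Hp H1 Hm Hc0 Hmgf)).
  assert (E0 : Eset p m c z 0) by (exists 0; split; [lra|]; rewrite (Lf_0 p m H1); ring).
  destruct HI0 as [HIp|HI0].
  2:{ rewrite <- HI0. apply (hat_tail_y p m c Hp H1 Hm Hmgf); auto. lra. }
  set (s := 1 / q).
  assert (Hs : 0 < s < 1) by (unfold s; split; [apply Rdiv_lt_0_compat; lra| apply Rmult_lt_reg_r with q; [lra|]; field_simplify; lra]).
  set (P := Ex p n [1%nat] (fun h => indP (z * Mf m h n >= z * z * Sf h n))).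
  destruct (Good_bdd p Hp Hc n [1%nat] (fun h => indP (z * Mf m h n >= z * z * Sf h n)) 1
              ltac:(intros; apply indP_01)) as [GI HP01]. fold P in HP01.
  set (g := fun h => - ((q - 1) * I0 * Sf h n)).
  assert (Hg : forall h, g h <= 0).
  { intros h. unfold g. pose proof (Sf_nonneg h n). assert (0 <= (q - 1) * I0 * Sf h n) by (apply Rmult_le_pos; [apply Rmult_le_pos|]; lra). lra. }
  destruct (Good_bdd p Hp Hc n [1%nat] (fun h => exp (g h)) 1
              ltac:(intros h _; split; [left; apply exp_pos| apply exp_le1; apply Hg])) as [Gg [_ Hb1]].
  set (bI := Ex p n [1%nat] (fun h => exp (g h))) in *.
  assert (Hb : 0 < bI) by (apply Ex_pos; auto; intros; apply exp_pos).
  change (P <= exp (s * ln bI)).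
  destruct (Rle_dec P (exp (s * ln bI))) as [ok|nok]; auto. exfalso. apply Rnot_le_lt in nok.
  assert (Hlnb : ln bI <= 0) by (rewrite <- ln_1; destruct Hb1 as [Hb1|Hb1]; [left; apply ln_increasing; auto|rewrite Hb1; right; reflexivity]).
  destruct Hlnb as [Hlnb|Hlnb].
  2:{ rewrite Hlnb, Rmult_0_r, exp_0 in nok. lra. }
  assert (HPp : 0 < P) by (pose proof (exp_pos (s * ln bI)); lra).
  set (k := s * ln bI / I0).
  assert (Hk : k < 0).
  { unfold k. unfold Rdiv. assert (s * ln bI < 0) by nra. assert (0 < / I0) by (apply Rinv_0_lt_compat; auto). nra. }
  assert (HlnP : s * ln bI < ln P) by (rewrite <- (ln_exp (s * ln bI)); apply ln_increasing; auto; apply exp_pos).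
  set (a := ln P / k).
  assert (Ha : a < I0).
  { unfold a. apply Rmult_lt_reg_r with (- k); [lra|].
    replace (ln P / k * - k) with (- ln P) by (field; lra).
    unfold k. replace (I0 * - (s * ln bI / I0)) with (- (s * ln bI)) by (field; lra). lra. }
  destruct (If_approx p m c Hp H1 Hm Hc0 Hmgf z (Rmax a 0) ltac:(apply Rmax_lub_lt; auto)) as [y [Ey Hy]].
  assert (Hya : a < y) by (pose proof (Rmax_l a 0); lra).
  assert (Hy0 : 0 <= y) by (pose proof (Rmax_r a 0); lra).
  assert (HyI : y <= I0) by (apply (If_ge p m c Hp H1 Hm Hc0 Hmgf); auto).
  pose proof (hat_tail_y p m c Hp H1 Hm Hmgf n z q y Hz Hq Ey Hy0) as T. fold P in T.
  set (s' := y / I0).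
  assert (Hs' : 0 <= s' <= 1).
  { unfold s'. split. apply Rmult_le_pos; auto. left; apply Rinv_0_lt_compat; auto.
    apply Rmult_le_reg_r with I0; auto. unfold Rdiv. rewrite Rmult_assoc, Rinv_l by lra. lra. }
  assert (EW : (fun h => exp (- ((q - 1) * y * Sf h n))) = (fun h => exp (s' * g h))).
  { apply functional_extensionality. intros h. unfold s', g. f_equal. field. lra. }
  rewrite EW in T.
  destruct (Good_bdd p Hp Hc n [1%nat] (fun h => exp (s' * g h)) 1
              ltac:(intros h _; split; [left; apply exp_pos| apply exp_le1; pose proof (Hg h); nra])) as [Gs' _].
  pose proof (jensen p Hp Hc n [1%nat] g s' Hs' Gg Gs') as Jn. fold bI in Jn.
  assert (Hpos : 0 < Ex p n [1%nat] (fun h => exp (s' * g h))) by (apply Ex_pos; auto; intros; apply exp_pos).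
  assert (ln (Ex p n [1%nat] (fun h => exp (s' * g h))) <= s' * ln bI).
  { rewrite <- (ln_exp (s' * ln bI)). destruct Jn as [Jn|Jn]. left; apply ln_increasing; auto. rewrite Jn; lra. }
  assert (T2 : P <= exp (k * y)).
  { apply Rle_trans with (1 := T). apply exp_le_exp. unfold k.
    replace (s * ln bI / I0 * y) with (s * (s' * ln bI)) by (unfold s'; field; lra).
    apply Rmult_le_compat_l; lra. }
  assert (k * y < ln P).
  { replace (ln P) with (k * a) by (unfold a; field; lra). nra. }
  assert (exp (k * y) < P) by (rewrite <- (exp_ln P) by auto; apply exp_increasing; auto).
  lra.
Qed.

End Hat3.

Lemma split_event An Bn m x : 0 <= An -> 0 <= Bn -> 0 < x -> Rabs (An / Bn - m) >= x ->
  x * (An - m * Bn) >= x * x * Bn \/ - x * (An - m * Bn) >= - x * - x * Bn.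
Proof.
  intros HA HB Hx HE. destruct HB as [HB|HB].
  - set (r := An / Bn) in HE. assert (Hj : An = r * Bn) by (unfold r; field; lra).
    rewrite Hj. destruct (Rcase_abs (r - m)) as [Hn|Hn].
    + rewrite Rabs_left in HE by lra. right.
      assert (0 <= (x * Bn) * (-(r - m) - x)) by (apply Rmult_le_pos; nra).
      apply Rle_ge. apply Rminus_le. replace (- x * - x * Bn - - x * (r * Bn - m * Bn)) with (- ((x * Bn) * (-(r - m) - x))) by ring. lra.
    + rewrite Rabs_right in HE by lra. left.
      assert (0 <= (x * Bn) * ((r - m) - x)) by (apply Rmult_le_pos; nra).
      apply Rle_ge. apply Rminus_le. replace (x * x * Bn - x * (r * Bn - m * Bn)) with (- ((x * Bn) * ((r - m) - x))) by ring. lra.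
  - subst Bn. left. rewrite Rmult_0_r, Rminus_0_r, Rmult_0_r. apply Rle_ge, Rmult_le_pos; lra.
Qed.

Section Main.
Variables (p : nat -> R) (m c : R).
Hypothesis Hp : forall k, 0 <= p k.
Hypothesis H1 : infinite_sum p 1.
Hypothesis Hm : infinite_sum (fun k => INR k * p k) m.
Hypothesis Hc0 : 0 < c.
Hypothesis Hmgf : forall t, -c <= t <= c ->
       exists l, infinite_sum (fun k => p k * exp (t * (INR k - m))) l.

Let Hc := conv_sum1 p Hp H1.

Lemma tilde2 n x q : (1 <= n)%nat -> 0 < x -> 1 < q ->
  GWP p n (fun h => Rabs (mtilde h n - m) >= x)
    <= 2 * Rpower (GWE p n (fun h => exp (- ((q - 1) * Jf p m c x * Xk h (n - 1))))) (1 / q).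
Proof.
  intros Hn Hx Hq.
  eapply Rle_trans. apply (tilde1 p m c Hp H1 Hm Hc0 Hmgf n x Hn Hx).
  apply Rmult_le_compat_l; [lra|]. unfold GWE, Rpower.
  pose proof (Jf_nonneg p m c Hp H1 Hm Hc0 Hmgf x) as HJ.
  set (J := Jf p m c x) in *.
  set (s := 1 / q).
  assert (Hs : 0 < s < 1) by (unfold s; split; [apply Rdiv_lt_0_compat; lra| apply Rmult_lt_reg_r with q; [lra|]; field_simplify; lra]).
  set (g := fun h => - ((q - 1) * J * Xk h (n - 1))).
  assert (Hg : forall h, g h <= 0).
  { intros h. unfold g. pose proof (Xk_nonneg h (n - 1)). assert (0 <= (q - 1) * J * Xk h (n - 1)) by (apply Rmult_le_pos; [apply Rmult_le_pos|]; lra). lra. }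
  destruct (Good_bdd p Hp Hc n [1%nat] (fun h => exp (g h)) 1
              ltac:(intros h _; split; [left; apply exp_pos| apply exp_le1; apply Hg])) as [Gg _].
  destruct (Good_bdd p Hp Hc n [1%nat] (fun h => exp (s * g h)) 1
              ltac:(intros h _; split; [left; apply exp_pos| apply exp_le1; pose proof (Hg h); nra])) as [Gs _].
  assert (HX : forall h, - J * Xk h (n - 1) <= 0) by (intros h; pose proof (Xk_nonneg h (n-1)); nra).
  destruct (Good_bdd p Hp Hc n [1%nat] (fun h => exp (- J * Xk h (n - 1))) 1
              ltac:(intros h _; split; [left; apply exp_pos| apply exp_le1; apply HX])) as [G0 _].
  eapply Rle_trans; [|apply (jensen p Hp Hc n [1%nat] g s ltac:(lra) Gg Gs)].
  apply (Ex_mono p Hp); auto. intros h _. apply exp_le_exp. unfold g, s.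
  pose proof (Xk_nonneg h (n - 1)).
  assert (0 <= J * Xk h (n - 1) / q) by (apply Rmult_le_pos; [apply Rmult_le_pos; lra|left; apply Rinv_0_lt_compat; lra]).
  replace (1 / q * - ((q - 1) * J * Xk h (n - 1))) with (- J * Xk h (n - 1) + J * Xk h (n - 1) / q) by (field; lra).
  lra.
Qed.

Lemma hat_final n x q : (1 <= n)%nat -> 0 < x -> 1 < q ->
  GWP p n (fun h => Rabs (mhat h n - m) >= x)
    <= 2 * Rpower (GWE p n (fun h => exp (- ((q - 1) * Jf p m c x * Sk h (n - 1))))) (1 / q).
Proof.
  intros Hn Hx Hq. destruct n as [|n0]; [lia|]. replace (S n0 - 1)%nat with n0 by lia.
  set (n := S n0).
  unfold GWP, GWE, Rpower.
  set (s := 1 / q).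
  assert (Hs : 0 < s) by (unfold s; apply Rdiv_lt_0_compat; lra).
  set (I1 := fun h => indP (x * Mf m h n >= x * x * Sf h n)).
  set (I2 := fun h => indP (- x * Mf m h n >= - x * - x * Sf h n)).
  destruct (Good_bdd p Hp Hc n [1%nat] I1 1 ltac:(intros; apply indP_01)) as [G1 _].
  destruct (Good_bdd p Hp Hc n [1%nat] I2 1 ltac:(intros; apply indP_01)) as [G2 _].
  destruct (Good_lin p n [1%nat] I1 I2 1 1 G1 G2) as [G12 E12].
  destruct (Good_bdd p Hp Hc n [1%nat] (fun h => if excluded_middle_informative (Rabs (mhat h n - m) >= x) then 1 else 0) 1
     ltac:(intros; apply (indP_01 (Rabs (mhat h' n - m) >= x)))) as [G0 _].
  assert (HSk : forall h, Sk h n0 = Sf h n) by (intros h; unfold Sk, Sf, n; rewrite sumr_f; reflexivity).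
  apply Rle_trans with (Ex p n [1%nat] (fun h => 1 * I1 h + 1 * I2 h)).
  - apply (Ex_mono p Hp); auto. intros h _. rewrite !Rmult_1_l. unfold I1, I2.
    apply (indP_or (Rabs (mhat h n - m) >= x)). intros HE.
    assert (EM : Mf m h n = sum_f_R0 (fun k => Xk h (S k)) n0 - m * sum_f_R0 (fun k => Xk h k) n0).
    { unfold Mf, n. rewrite sumr_lin, !sumr_f. reflexivity. }
    rewrite EM, <- HSk. unfold Sk. apply split_event; auto.
    + apply cond_pos_sum. intros; apply Xk_nonneg.
    + apply cond_pos_sum. intros; apply Xk_nonneg.
    + unfold mhat in HE. replace (n - 1)%nat with n0 in HE by (unfold n; lia). exact HE.
  - rewrite E12.
    assert (Bnd : forall z, z <> 0 -> Jf p m c x <= If p m c z ->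
       1 * Ex p n [1%nat] (fun h => indP (z * Mf m h n >= z * z * Sf h n)) <=
       exp (s * ln (Ex p n [1%nat] (fun h => exp (- ((q - 1) * Jf p m c x * Sk h n0)))))).
    { intros z Hz HJI. rewrite Rmult_1_l.
      eapply Rle_trans. apply (hat_tail p m c Hp H1 Hm Hc0 Hmgf n z q Hz Hq).
      fold s. apply exp_le_exp. apply Rmult_le_compat_l; [lra|].
      assert (Hmono : forall h, - ((q - 1) * If p m c z * Sf h n) <= - ((q - 1) * Jf p m c x * Sk h n0)).
      { intros h. rewrite HSk. pose proof (Sf_nonneg h n). assert (0 <= (q - 1) * Sf h n * (If p m c z - Jf p m c x)) by (apply Rmult_le_pos; [apply Rmult_le_pos|]; lra). replace (- ((q - 1) * Jf p m c x * Sf h n)) with (- ((q - 1) * If p m c z * Sf h n) + (q - 1) * Sf h n * (If p m c z - Jf p m c x)) by ring. lra. }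
      assert (HJ := Jf_nonneg p m c Hp H1 Hm Hc0 Hmgf x).
      assert (HI := If_nonneg p m c Hp H1 Hm Hc0 Hmgf z).
      assert (P1 : forall h, - ((q - 1) * If p m c z * Sf h n) <= 0).
      { intros h. pose proof (Sf_nonneg h n). assert (0 <= (q - 1) * If p m c z * Sf h n) by (apply Rmult_le_pos; [apply Rmult_le_pos|]; lra). lra. }
      assert (P2 : forall h, - ((q - 1) * Jf p m c x * Sk h n0) <= 0).
      { intros h. rewrite HSk. pose proof (Sf_nonneg h n). assert (0 <= (q - 1) * Jf p m c x * Sf h n) by (apply Rmult_le_pos; [apply Rmult_le_pos|]; lra). lra. }
      destruct (Good_bdd p Hp Hc n [1%nat] (fun h => exp (- ((q - 1) * If p m c z * Sf h n))) 1
         ltac:(intros h _; split; [left; apply exp_pos|apply exp_le1; apply P1])) as [Ga _].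
      destruct (Good_bdd p Hp Hc n [1%nat] (fun h => exp (- ((q - 1) * Jf p m c x * Sk h n0))) 1
         ltac:(intros h _; split; [left; apply exp_pos|apply exp_le1; apply P2])) as [Gb _].
      assert (Pa : 0 < Ex p n [1%nat] (fun h => exp (- ((q - 1) * If p m c z * Sf h n)))) by (apply Ex_pos; auto; intros; apply exp_pos).
      assert (Le : Ex p n [1%nat] (fun h => exp (- ((q - 1) * If p m c z * Sf h n))) <=
                   Ex p n [1%nat] (fun h => exp (- ((q - 1) * Jf p m c x * Sk h n0)))).
      { apply (Ex_mono p Hp); auto. intros h _. apply exp_le_exp. apply Hmono. }
      destruct Le as [Le|Le]. left; apply ln_increasing; auto. rewrite Le; lra. }
    pose proof (Bnd x ltac:(lra) ltac:(unfold Jf; apply Rmin_l)).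
    pose proof (Bnd (-x) ltac:(lra) ltac:(unfold Jf; apply Rmin_r)).
    unfold I1, I2. lra.
Qed.

End Main.

Theorem corollary5p3 :
  forall (p : nat -> R) (m c : R),
    (forall k, 0 <= p k) ->
    infinite_sum p 1 ->
    infinite_sum (fun k => INR k * p k) m ->
    1 < m ->
    (exists v, infinite_sum (fun k => (INR k - m) ^ 2 * p k) v) ->
    (forall n, GWP p n (fun h => nth n h 0%nat = 0%nat) = 0) ->
    0 < c ->
    (forall t, -c <= t <= c ->
       exists l, infinite_sum (fun k => p k * exp (t * (INR k - m))) l) ->
    forall (n : nat) (x : R), (1 <= n)%nat -> 0 < x ->
      GWP p n (fun h => Rabs (mtilde h n - m) >= x)
        <= 2 * GWE p n (fun h => exp (- Jf p m c x * Xk h (n - 1)))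
      /\ (forall q, 1 < q ->
           GWP p n (fun h => Rabs (mtilde h n - m) >= x)
             <= 2 * Rpower (GWE p n (fun h => exp (- ((q - 1) * Jf p m c x * Xk h (n - 1))))) (1 / q))
      /\ (forall q, 1 < q ->
           GWP p n (fun h => Rabs (mhat h n - m) >= x)
             <= 2 * Rpower (GWE p n (fun h => exp (- ((q - 1) * Jf p m c x * Sk h (n - 1))))) (1 / q)).
Proof.
  intros p m c Hp H1 Hm _ _ _ Hc0 Hmgf n x Hn Hx.
  split; [|split].
  - apply (tilde1 p m c Hp H1 Hm Hc0 Hmgf n x Hn Hx).
  - intros q Hq. apply (tilde2 p m c Hp H1 Hm Hc0 Hmgf n x q Hn Hx Hq).
  - intros q Hq. apply (hat_final p m c Hp H1 Hm Hc0 Hmgf n x q Hn Hx Hq).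
Qed.
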